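(* Assume $\mathrm{recc}(C)\subseteq\mathrm{recc}(P^B)$. Let $D\subseteq N_1\cup N_2$ and $S\subseteq M_D$. Then every $x\in P^B\setminus G_D^C$ satisfies $$\sum_{j\in S}\frac{x_j}{\alpha_j}-\sum_{j\in N\setminus D}\frac{x_j}{\varepsilon_j(S)}\le 1.$$
   Context: Let $A\in\mathbb{R}^{m\times n}$ have full row rank, $b\in\mathbb{R}^m$, and $P=\{x\in\mathbb{R}^n_+:Ax=b\}$. Let $C\subseteq\mathbb{R}^n$ be an open convex set. Fix a basis $B$ of $P$ with nonbasic set $N=\{1,\dots,n\}\setminus B$. Write $P=\{x:x_i=\bar b_i-\sum_{j\in N}\bar a_{ij}x_j\ (i\in B),\ x_j\ge0\ (j=1,\dots,n)\}$ with $\bar b\ge0$. The basic solution $\bar x$ has $\bar x_i=\bar b_i$ ($i\in B$) and $0$ ($i\in N$). $P^B$ is obtained by dropping $x_i\ge0$ for $i\in B$. For $j\in N$, $\bar r^j$ has $\bar r^j_k=-\bar a_{kj}$ ($k\in B$), $\bar r^j_j=1$, and $0$ otherwise. Thus $P^B=\{\bar x+\sum_{j\in N}x_j\bar r^j:x_j\ge0\}$, and for $x\in P^B$ the $x_j$ ($j\in N$) are the coefficients in this representation. It is assumed that $\bar x\notin\mathrm{cl}(C)$. For $j\in N$, $\alpha_j=\inf\{\lambda\ge0:\bar x+\lambda\bar r^j\in C\}$ and $\beta_j=\sup\{\lambda\ge0:\bar x+\lambda\bar r^j\in C\}$, with $\alpha_j=+\infty$, $\beta_j=-\infty$ if that halfline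 misses $C$. Define - $N_1=\{j:\alpha_j\in(0,\infty),\beta_j=+\infty\}$; - $N_2=\{j:\alpha_j\in(0,\infty),\beta_j\in(\alpha_j,\infty)\}$. For a set $K$, $\mathrm{recc}(K)=\{d:x+\lambda d\in K\ \forall x\in K,\lambda\ge0\}$. We use the convention $t/+\infty=0$. For $D\subseteq N_1\cup N_2$, define $G_D=\{\bar x\}+\mathrm{conv}\big(\bigcup_{j\in D}\{\lambda\bar r^j:\lambda>\alpha_j\}\big)$ and $G_D^C=G_D+\mathrm{recc}(C)$. For $(i,j)\in D\times(N\setminus D)$ let $\gamma_{ij}=\sup\{\gamma\ge0:\alpha_i\bar r^i+\gamma\bar r^j\in\mathrm{recc}(G_D^C)\}$. Let $M_D=\{i\in D:\gamma_{ij}>0\ \forall j\in N\setminus D\}$. For $S\subseteq M_D$ and $j\in N\setminus D$, let $\varepsilon_j(S)=\min_{i\in S}\gamma_{ij}$ if $S\neq\emptyset$, and $\varepsilon_j(\emptyset)=+\infty$. *)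

(* Defs.v *)
(* Points of R^n are row vectors 'rV[R]_n
   (which carry the product/matrix topology), coordinates x_j are  x 0 j. *)
From HB Require Import structures.
From mathcomp Require Import all_boot all_order all_algebra.
From mathcomp Require Import all_classical all_reals all_analysis.
From mathcomp Require Import matrix_topology.
Import Order.TTheory GRing.Theory Num.Theory.
Import numFieldTopology.Exports numFieldNormedType.Exports.

Set Implicit Arguments.
Unset Strict Implicit.
Unset Printing Implicit Defensive.

Local Open Scope classical_set_scope.
Local Open Scope ring_scope.

Section Defs.
Variables (R : realType) (m n : nat).
Implicit Types (K : set 'rV[R]_n).

Definition convex_set_rV K : Prop :=
  forall x y t, K x -> K y -> 0 <= t <= 1 -> K (t *: x + (1 - t) *: y).

Definition recc K : set 'rV[R]_n :=
  [set d | forall x lam, K x -> 0 <= lam -> K (x + lam *: d)].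

Definition conv_hull K : set 'rV[R]_n :=
  [set x | exists (k : nat) (w : 'I_k -> R) (p : 'I_k -> 'rV[R]_n),
      (forall i, 0 <= w i) /\ \sum_i w i = 1 /\ (forall i, K (p i)) /\
      x = \sum_i w i *: p i].

Definition msum K1 K2 : set 'rV[R]_n :=
  [set x | exists y z, K1 y /\ K2 z /\ x = y + z].

Variables (A : 'M[R]_(m, n)) (b : 'cV[R]_m) (beta : 'I_m -> 'I_n).

Definition basis_mx : 'M[R]_m := \matrix_(k, l) A k (beta l).
(** row l of the tableau corresponds to the basic variable beta l *)
Definition Abar : 'M[R]_(m, n) := invmx basis_mx *m A.
Definition bbar : 'cV[R]_m := invmx basis_mx *m b.

Definition Bset : {set 'I_n} := [set beta l | l : 'I_m].
Definition Nset : {set 'I_n} := ~: Bset.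

Definition xbar : 'rV[R]_n :=
  \row_i (if [pick l | beta l == i] is Some l then bbar l 0 else 0).

Definition rbar (j : 'I_n) : 'rV[R]_n :=
  \row_k (if [pick l | beta l == k] is Some l then - Abar l j
          else (k == j)%:R).

(** P^B : drop the nonnegativity of the basic variables in the tableau form *)
Definition PB : set 'rV[R]_n :=
  [set x | (forall j, j \in Nset -> 0 <= x 0 j) /\
           (forall l, x 0 (beta l) = bbar l 0 - \sum_(j in Nset) Abar l j * x 0 j)].

Variable (C : set 'rV[R]_n).

Definition alpha (j : 'I_n) : \bar R :=
  ereal_inf [set lam%:E | lam in [set lam : R | 0 <= lam /\ C (xbar + lam *: rbar j)]].
Definition beta_ (j : 'I_n) : \bar R :=
  ereal_sup [set lam%:E | lam in [set lam : R | 0 <= lam /\ C (xbar + lam *: rbar j)]].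

Definition inN1 (j : 'I_n) : Prop :=
  j \in Nset /\ (0 < alpha j < +oo)%E /\ beta_ j = +oo%E.
Definition inN2 (j : 'I_n) : Prop :=
  j \in Nset /\ (0 < alpha j < +oo)%E /\ (alpha j < beta_ j < +oo)%E.

Definition G (D : {set 'I_n}) : set 'rV[R]_n :=
  msum [set xbar]
    (conv_hull [set y | exists j lam, j \in D /\ (alpha j < lam%:E)%E /\
                                      y = lam *: rbar j]).

Definition GC (D : {set 'I_n}) : set 'rV[R]_n := msum (G D) (recc C).

Definition gamma (D : {set 'I_n}) (i j : 'I_n) : \bar R :=
  ereal_sup [set g%:E | g in [set g : R | 0 <= g /\
      recc (GC D) (fine (alpha i) *: rbar i + g *: rbar j)]].

Definition inM (D : {set 'I_n}) (i : 'I_n) : Prop :=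
  i \in D /\ forall j, j \in Nset :\: D -> (0 < gamma D i j)%E.

Definition eps (D S : {set 'I_n}) (j : 'I_n) : \bar R :=
  \big[Order.min/+oo%E]_(i in S) gamma D i j.

End Defs.

(** t / e for an extended real e, with the convention t / +oo = 0
    (the value -oo never occurs in the statement) *)
Definition ediv (R : realType) (t : R) (e : \bar R) : R :=
  match e with
  | EFin r => t / r
  | _ => 0
  end.

(* Main.v *)
Require Import Defs.
From HB Require Import structures.
From mathcomp Require Import all_boot all_order all_algebra.
From mathcomp Require Import all_classical all_reals all_analysis.
From mathcomp Require Import matrix_topology.
From mathcomp Require Import ring lra.
Import Order.TTheory GRing.Theory Num.Theory.
Import numFieldTopology.Exports numFieldNormedType.Exports.
Local Open Scope classical_set_scope.
Local Open Scope ring_scope.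

Section Helpers.
Variables (R : realType) (n : nat).

Lemma recc0 (K : set 'rV[R]_n) : recc K 0.
Proof. by move=> x lam Kx _; rewrite scaler0 addr0. Qed.

Lemma reccD (K : set 'rV[R]_n) d1 d2 : recc K d1 -> recc K d2 -> recc K (d1 + d2).
Proof. by move=> h1 h2 x lam Kx l0; rewrite scalerDr addrA; apply: h2 => //; apply: h1. Qed.

Lemma reccZ (K : set 'rV[R]_n) c d : 0 <= c -> recc K d -> recc K (c *: d).
Proof. by move=> c0 h x lam Kx l0; rewrite scalerA; apply: h => //; rewrite mulr_ge0. Qed.

Lemma recc_sum (K : set 'rV[R]_n) (I : finType) (P : pred I) (F : I -> 'rV[R]_n) :
  (forall i, P i -> recc K (F i)) -> recc K (\sum_(i | P i) F i).
Proof. by move=> h; apply: (big_ind (recc K)) => //; [exact: recc0 | exact: reccD]. Qed.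

Lemma sup_choose (Sg : set R) (eta : R) :
  (0 < ereal_sup [set g%:E | g in Sg])%E -> 0 < eta ->
  exists g, Sg g /\ 0 < g /\ g^-1 <= ediv 1 (ereal_sup [set g%:E | g in Sg]) + eta.
Proof.
set s := ereal_sup _ => s0 e0.
case E: s => [r| |]; rewrite E in s0 *.
- have r0 : 0 < r by rewrite -lte_fin.
  have hr : ((r / (1 + eta * r))%:E < s)%E.
    rewrite E lte_fin ltr_pdivrMr; last by rewrite ltr_wpDr // mulr_ge0 // ltW.
    by rewrite ltr_pMr // ltrDl mulr_gt0.
  have [y [g Sg_g <-] gy] := ereal_sup_gt hr.
  rewrite lte_fin in gy.
  have p0 : 0 < r / (1 + eta * r) by rewrite divr_gt0 // addr_gt0 // mulr_gt0.
  have g0 : 0 < g by apply: lt_trans gy.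
  exists g; split => //; split => //=.
  have h1 : g^-1 <= (r / (1 + eta * r))^-1 by rewrite lef_pV2 ?posrE // ltW.
  apply: (le_trans h1); rewrite invf_div /ediv mulrDl div1r mulrK //.
  by rewrite unitfE gt_eqF.
- have hr : ((eta^-1)%:E < s)%E by rewrite E ltry.
  have [y [g Sg_g <-] gy] := ereal_sup_gt hr.
  rewrite lte_fin in gy.
  have g0 : 0 < g by apply: lt_trans gy; rewrite invr_gt0.
  exists g; split => //; split => //=; rewrite add0r.
  by rewrite -[eta]invrK lef_pV2 ?posrE ?invr_gt0 // ltW.
- by [].
Qed.
End Helpers.

Section Tab.
Variables (R : realType) (m n : nat) (A : 'M[R]_(m, n)) (b : 'cV[R]_m)
  (beta : 'I_m -> 'I_n) (C : set 'rV[R]_n).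
Hypothesis inj : injective beta.

Lemma PB_decomp x : PB A b beta x ->
  x = xbar A b beta + \sum_(j in Nset beta) x 0 j *: rbar A beta j.
Proof.
move=> [xN xB]; apply/rowP => k; rewrite !mxE summxE.
case: pickP => [l /eqP bl | nb].
- under eq_bigr do rewrite !mxE.
  case: pickP => [l' /eqP bl'|/(_ l)]; last by rewrite bl eqxx.
  have ll : l' = l by apply: inj; rewrite bl bl'.
  rewrite ll -bl xB; congr (_ + _); rewrite -sumrN; apply: eq_bigr => j _.
  by rewrite mulrN mulrC.
- have kN : k \in Nset beta.
    rewrite /Nset finset.in_setC; apply/imsetP => [[l _ kl]].
    by move: (nb l); rewrite -kl eqxx.
  rewrite (bigD1 k) //= big1 ?addr0.
    by rewrite !mxE; case: pickP => [l|_]; [by rewrite nb|]; rewrite eqxx mulr1 add0r.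
  move=> j /andP[_ jk]; rewrite !mxE; case: pickP => [l|_]; first by rewrite nb.
  by rewrite eq_sym (negbTE jk) mulr0.
Qed.

Lemma G_mem (D : {set 'I_n}) (mu : 'I_n -> R) j0 :
  j0 \in D ->
  (forall j, j \in D -> 0 < fine (alpha A b beta C j) /\ alpha A b beta C j = (fine (alpha A b beta C j))%:E) ->
  (forall j, j \in D -> 0 <= mu j) ->
  1 < \sum_(j in D) mu j / fine (alpha A b beta C j) ->
  G A b beta C D (xbar A b beta + \sum_(j in D) mu j *: rbar A beta j).
Proof.
move=> j0D ha mu0.
set a := fun j => fine (alpha A b beta C j).
set tau := \sum_(j in D) _ => tau1.
have tau0 : 0 < tau by apply: lt_trans tau1.
exists (xbar A b beta), (\sum_(j in D) mu j *: rbar A beta j); split => //; split => //.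
exists n, (fun i => if i \in D then mu i / (a i * tau) else 0),
  (fun i => if i \in D then (a i * tau) *: rbar A beta i else (a j0 * tau) *: rbar A beta j0).
split; [|split; [|split]].
- move=> i; case: ifP => // iD.
  by rewrite divr_ge0 ?mu0 // mulr_ge0 // ltW // (ha i iD).1.
- rewrite -big_mkcond /=.
  under eq_bigr => i iD do rewrite invfM mulrA.
  by rewrite -mulr_suml divff // gt_eqF.
- move=> i; case: ifP => iD.
  + exists i, (a i * tau); split => //; split => //.
    have [ai0 ->] := ha i iD; rewrite lte_fin ltr_pMr //.
  + exists j0, (a j0 * tau); split => //; split => //.
    have [ai0 ->] := ha j0 j0D; rewrite lte_fin ltr_pMr //.
- rewrite [RHS](bigID (fun i => i \in D)) /= [X in _ = _ + X]big1 ?addr0; last first.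
    by move=> i /negbTE ->; rewrite scale0r.
  apply: eq_bigr => i iD; rewrite iD scalerA mulfVK //.
  by rewrite mulf_neq0 // gt_eqF // (ha i iD).1.
Qed.
End Tab.

Lemma ediv1_anti (R : realType) (e1 e2 : \bar R) :
  (0 < e1)%E -> (e1 <= e2)%E -> ediv 1 e2 <= ediv 1 e1.
Proof.
case: e1 => [r1| |] //; case: e2 => [r2| |] //=; rewrite ?lte_fin ?lee_fin.
- by move=> r0 r12; rewrite !div1r lef_pV2 ?posrE // (lt_le_trans r0).
- by move=> r0 _; rewrite div1r invr_ge0 ltW.
Qed.

Lemma edivE (R : realType) (t : R) (e : \bar R) : ediv t e = t * ediv 1 e.
Proof. by case: e => [r| |] //=; rewrite ?mul1r ?mulr0 // mulrA mulr1. Qed.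

Lemma sum_if_scale (R : realType) (n : nat) (D S : {set 'I_n}) (v : 'I_n -> R)
   (r : 'I_n -> 'rV[R]_n) : S \subset D ->
  \sum_(j in D) (if j \in S then v j else 0) *: r j = \sum_(j in S) v j *: r j.
Proof.
move=> SD; rewrite (bigID (fun j => j \in S)) /= [X in _ + X]big1 ?addr0; last first.
  by move=> j /andP[_ /negbTE ->]; rewrite scale0r.
apply: eq_big => [j|j /andP[_ ->] //].
apply/andP/idP => [[]//|jS]; split=> //; exact: (fintype.subsetP SD j jS).
Qed.

Lemma sum_if (V : nmodType) (n : nat) (D S : {set 'I_n}) (F : 'I_n -> V) :
  S \subset D ->
  \sum_(j in D) (if j \in S then F j else 0) = \sum_(j in S) F j.
Proof.
move=> SD; rewrite (bigID (fun j => j \in S)) /= [X in _ + X]big1 ?addr0; last first.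
  by move=> j /andP[_ /negbTE ->].
apply: eq_big => [j|j /andP[_ ->] //].
by apply/andP/idP => [[]//|jS]; split=> //; exact: (fintype.subsetP SD j jS).
Qed.

Theorem theorem3 (R : realType) (m n : nat) (A : 'M[R]_(m, n)) (b : 'cV[R]_m)
    (beta : 'I_m -> 'I_n) (C : set 'rV[R]_n) (D S : {set 'I_n}) :
  \rank A = m ->
  injective beta ->
  basis_mx A beta \in unitmx ->
  (forall l, 0 <= bbar A b beta l 0) ->
  open C -> convex_set_rV C ->
  ~ closure C (xbar A b beta) ->
  recc C `<=` recc (PB A b beta) ->
  (forall j, j \in D -> inN1 A b beta C j \/ inN2 A b beta C j) ->
  (forall i, i \in S -> inM A b beta C D i) ->
  forall x : 'rV[R]_n, PB A b beta x -> ~ GC A b beta C D x ->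
    \sum_(j in S) ediv (x 0 j) (alpha A b beta C j)
    - \sum_(j in Nset beta :\: D) ediv (x 0 j) (eps A b beta C D S j) <= 1.
Proof.
move=> _ inj _ _ _ _ _ _ hD hS x xPB xnG.
rewrite leNgt; apply/negP => hlt; apply: xnG.
set a := fun j => fine (alpha A b beta C j).
set T := Nset beta :\: D.
set r := rbar A beta.
have haD : forall j, j \in D -> j \in Nset beta /\ 0 < a j /\ alpha A b beta C j = (a j)%:E.
  move=> j /hD [[jN [/andP[h1 h2] _]]|[jN [/andP[h1 h2] _]]];
  (split => //; rewrite /a; move: h1 h2; case: (alpha A b beta C j) => //= r0 h1 _;
   by rewrite -lte_fin).
have SD : S \subset D by apply/fintype.subsetP => i /hS [].
have DN : forall j, j \in D -> j \in Nset beta by move=> j /haD [].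
have xN : forall j, j \in Nset beta -> 0 <= x 0 j by case: xPB.
have xD : forall j, j \in D -> 0 <= x 0 j by move=> j /DN /xN.
have xT : forall j, j \in T -> 0 <= x 0 j by move=> j; rewrite inE => /andP[_ /xN].
have aS : forall i, i \in S -> 0 < a i by move=> i /(fintype.subsetP SD) /haD [_ []].
set sigma := \sum_(i in S) x 0 i / a i.
have hsig : \sum_(j in S) ediv (x 0 j) (alpha A b beta C j) = sigma.
  by apply: eq_bigr => j /(fintype.subsetP SD) /haD [_ [_ ->]].
rewrite hsig in hlt.
set E := \sum_(j in T) _ in hlt.
set X := \sum_(j in T) x 0 j.
have X0 : 0 <= X by apply: sumr_ge0.
set eta := (sigma - 1 - E) / (X + 1).
have eta0 : 0 < eta by rewrite divr_gt0 //; lra.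
have eps_gam : forall i j, i \in S -> (eps A b beta C D S j <= gamma A b beta C D i j)%E.
  by move=> i j iS; rewrite /eps (bigD1 i) //= ge_min lexx.
have eps_pos : forall j, j \in T -> (0 < eps A b beta C D S j)%E.
  move=> j jT; rewrite /eps; apply: (big_ind (fun e => 0 < e)%E) => //.
    by move=> e1 e2 h1 h2; rewrite lt_min h1 h2.
  by move=> i /hS [_ /(_ j jT)].
have hg : forall p : 'I_n * 'I_n, exists g : R, p.1 \in S -> p.2 \in T ->
   0 < g /\ recc (GC A b beta C D) (a p.1 *: r p.1 + g *: r p.2) /\
   g^-1 <= ediv 1 (eps A b beta C D S p.2) + eta.
  case=> i j /=; case: (boolP (i \in S)) => iS; last by exists 1.
  case: (boolP (j \in T)) => jT; last by exists 1.
  have [_ /(_ j jT) gp] := hS i iS.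
  have [g [[_ Hg] [g0 Hle]]] := @sup_choose _ _ _ gp eta0.
  exists g => _ _; split => //; split => //.
  apply: le_trans Hle _; rewrite lerD2r; apply: ediv1_anti; [exact: eps_pos|exact: eps_gam].
have [g gP] := choice hg.
set t := fun i => x 0 i / (a i * sigma).
set s := fun i => \sum_(j in T) x 0 j / g (i, j).
set c := fun i j => t i * x 0 j / g (i, j).
set d := \sum_(j in T) \sum_(i in S) c i j *: (a i *: r i + g (i, j) *: r j).
set mu := fun j => x 0 j - (if j \in S then a j * (t j * s j) else 0).
have E0 : 0 <= E.
  apply: sumr_ge0 => j jT; rewrite edivE mulr_ge0 ?xT //.
  move: (eps_pos j jT); case: (eps _ _ _ _ _ _ j) => //= e; rewrite lte_fin => e0.
  by rewrite divr_ge0 // ltW.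
have sig1 : 1 < sigma by lra.
have sig0 : 0 < sigma by lra.
have t0 : forall i, i \in S -> 0 <= t i.
  by move=> i iS; rewrite /t divr_ge0 ?mulr_ge0 ?xD ?(fintype.subsetP SD) // ltW ?aS.
have tsum : \sum_(i in S) t i = 1.
  rewrite /t; under eq_bigr => i iS do rewrite invfM mulrA.
  by rewrite -mulr_suml divff // gt_eqF.
have gpos : forall i j, i \in S -> j \in T -> 0 < g (i, j).
  by move=> i j iS jT; have [] := gP (i, j) iS jT.
have KX : E + eta * X < sigma - 1.
  have : eta * X < sigma - 1 - E.
    have q1 : X / (X + 1) < 1 by rewrite ltr_pdivrMr ?mul1r; lra.
    have p0 : 0 < sigma - 1 - E by lra.
    by rewrite /eta -mulrA gtr_pMr // mulrC.
  lra.
have sK : forall i, i \in S -> s i <= E + eta * X.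
  move=> i iS; rewrite /s /E /X mulr_sumr -big_split /=; apply: ler_sum => j jT.
  have [g0 [_ gle]] := gP (i, j) iS jT.
  rewrite edivE [eta * _]mulrC -mulrDr; apply: ler_wpM2l; first exact: xT.
  exact: gle.
have hd : recc (GC A b beta C D) d.
  apply: recc_sum => j jT; apply: recc_sum => i iS; apply: reccZ.
    apply: mulr_ge0; [apply: mulr_ge0; [exact: t0 | exact: xT] | by rewrite invr_ge0 ltW ?gpos].
  by have [_ []] := gP (i, j) iS jT.
have dE : d = \sum_(i in S) (a i * (t i * s i)) *: r i + \sum_(j in T) x 0 j *: r j.
  rewrite /d; under eq_bigr do under eq_bigr do rewrite scalerDr !scalerA.
  under eq_bigr do rewrite big_split /=.
  rewrite big_split /=; congr (_ + _).
    rewrite exchange_big; apply: eq_bigr => i iS; rewrite -scaler_suml; congr (_ *: _).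
    rewrite /s !mulr_sumr; apply: eq_bigr => j jT; rewrite /c /=; ring.
  apply: eq_bigr => j jT; rewrite -scaler_suml; congr (_ *: _).
  under eq_bigr => i iS do rewrite /c divfK ?gt_eqF ?gpos //.
  by rewrite -mulr_suml tsum mul1r.
have xE : x = xbar A b beta + \sum_(j in D) mu j *: r j + d.
  rewrite {1}(@PB_decomp _ _ _ _ _ _ inj _ xPB).
  have -> : \sum_(j in Nset beta) x 0 j *: rbar A beta j =
      \sum_(j in D) x 0 j *: r j + \sum_(j in T) x 0 j *: r j.
    rewrite (bigID (fun j => j \in D)) /=; congr (_ + _); apply: eq_bigl => j.
      by apply/andP/idP => [[]//|jD]; split => //; exact: DN.
    by rewrite /T !inE andbC.
  have -> : \sum_(j in D) mu j *: r j = \sum_(j in D) x 0 j *: r j -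
      \sum_(j in S) (a j * (t j * s j)) *: r j.
    rewrite -[X in _ - X](@sum_if_scale _ _ D S) // -sumrB; apply: eq_bigr => j _.
    by rewrite /mu /= scalerBl.
  rewrite dE -addrA; congr (_ + _).
  by rewrite addrA subrK.
have [i0 i0S] : exists i0, i0 \in S.
  case: (set_0Vmem S) => [S0|[i0 ?]]; last by exists i0.
  by move: sig0; rewrite /sigma S0 big_set0 ltxx.
have aD : forall j, j \in D -> a j != 0.
  by move=> j jD; have [_ [a0 _]] := haD j jD; rewrite gt_eqF.
have mu0 : forall j, j \in D -> 0 <= mu j.
  move=> j jD; rewrite /mu /=; case: ifP => jS; last by rewrite subr0 xD.
  have -> : a j * (t j * s j) = x 0 j * (s j / sigma).
    rewrite /t /=; field; rewrite ?aD ?gt_eqF //.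
  have q1 : s j / sigma <= 1.
    by rewrite ler_pdivrMr ?mul1r //; have := sK j jS; lra.
  by have := xD j jD; nra.
have musum : 1 < \sum_(j in D) mu j / a j.
  have -> : \sum_(j in D) mu j / a j = \sum_(j in D) x 0 j / a j - \sum_(j in S) t j * s j.
    rewrite -[X in _ - X](@sum_if _ _ D S) // -sumrB; apply: eq_bigr => j jD.
    rewrite /mu /=; case: ifP => jS; last by rewrite !subr0.
    field; rewrite aD //.
  have h1 : sigma <= \sum_(j in D) x 0 j / a j.
    rewrite [X in _ <= X](bigID (fun j => j \in S)) /=.
    have -> : \sum_(j in D | j \in S) x 0 j / a j = sigma.
      apply: eq_bigl => j; apply/andP/idP => [[]//|jS]; split => //.
      exact: (fintype.subsetP SD).
    rewrite lerDl; apply: sumr_ge0 => j /andP[jD _]; rewrite divr_ge0 ?xD // ltW //.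
    by have [_ []] := haD j jD.
  have h2 : \sum_(j in S) t j * s j <= E + eta * X.
    apply: (@le_trans _ _ (\sum_(j in S) t j * (E + eta * X))).
      apply: ler_sum => j jS; apply: ler_wpM2l; [exact: t0 | exact: sK].
    by rewrite -mulr_suml tsum mul1r.
  lra.
have haD' : forall j, j \in D -> 0 < fine (alpha A b beta C j) /\
    alpha A b beta C j = (fine (alpha A b beta C j))%:E.
  by move=> j /haD [_ []].
have hG := @G_mem _ _ _ A b beta C D mu i0 (fintype.subsetP SD i0 i0S) haD' mu0 musum.
rewrite xE -[d]scale1r; apply: hd => //.
exists (xbar A b beta + \sum_(j in D) mu j *: r j), 0; split => //; split.
  exact: recc0.
by rewrite addr0.
Qed.
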